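(* Assume additivity: $\boldsymbol{\tau}_i$ is the same for all units $i$ (equivalently $\boldsymbol{S}_{\tau\tau}=\boldsymbol{0}$), and $\boldsymbol{V}_{\tau\tau}$ is invertible. Then the matrix $\boldsymbol{\Gamma}=\tilde{\boldsymbol{B}}^{-1/2}\boldsymbol{\Psi}\tilde{\boldsymbol{C}}^{1/2}$ is orthogonal and, for every $1\le h\le H$, $\boldsymbol{\Gamma}'\boldsymbol{V}_{\tau\tau}^{-1/2}\boldsymbol{W}^{\parallel}_{\tau\tau}[h]\boldsymbol{V}_{\tau\tau}^{-1/2}\boldsymbol{\Gamma}$ is diagonal; moreover its diagonal entries (the canonical correlations between $\hat{\boldsymbol{\tau}}$ and $\hat{\boldsymbol{\theta}}_x[h]$ under the CRFE) have exactly $F_h$ nonzero elements, all equal to $S^{\parallel}_{11}/S_{11}$.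
   Context: Setup ($2^K$ factorial experiment, finite population). $K\ge1$ two-level factors, $Q=2^K$ treatment combinations $q=1,\dots,Q$; combination $q$ sets factor $k$ at $\iota_k(q)\in\{-1,+1\}$, bijectively onto $\{-1,+1\}^K$. $F=Q-1$ factorial effects, one per nonempty $A\subseteq\{1,\dots,K\}$, enumerated $f=1,\dots,F$, with $g_{fq}=\prod_{k\in A}\iota_k(q)$; $\boldsymbol{b}_q=(g_{1q},\dots,g_{Fq})'$. Units $i=1,\dots,n$ have fixed potential outcomes $Y_i(q)$ and covariates $\boldsymbol{x}_i\in\mathbb{R}^L$; $\boldsymbol{\tau}_i=2^{-(K-1)}\sum_q\boldsymbol{b}_qY_i(q)$. Finite-population (co)variances with divisor $n-1$: $S_{qq}$ of $Y(q)$; $\boldsymbol{S}_{\tau\tau}$ of $\boldsymbol{\tau}_i$; $\boldsymbol{S}_{xx}$ of $\boldsymbol{x}$ (nonsingular); $\boldsymbol{S}_{q,x}$ between $Y(q)$ and $\boldsymbol{x}$; $S^{\parallel}_{11}=\boldsymbol{S}_{1,x}\boldsymbol{S}_{xx}^{-1}\boldsymbol{S}_{1,x}'$. Group sizes $n_q\ge1$, $\sum n_q=n$ (CRFE; $\hat{\boldsymbol{\tau}}=2^{-(K-1)}\sum_q\boldsymbol{b}_q\hat{\bar Y}(q)$, $\hat{\bar{\boldsymbol{x}}}(q)$ group covariate means). $\boldsymbol{V}_{\tau\tau}=2^{-2(K-1)}\sum_qn_q^{-1}\boldsymbol{b}_q\boldsymbol{b}_q'S_{qq}-n^{-1}\boldsymbol{S}_{\tau\tau}$;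 $\boldsymbol{A}^{1/2}$, $\boldsymbol{A}^{-1/2}$ denote symmetric PD roots. Tiers: partition $\{1,\dots,F\}$ into disjoint nonempty $\mathcal{F}_1,\dots,\mathcal{F}_H$, $F_h=|\mathcal{F}_h|$, $\mathcal{F}_{\overline h}=\bigcup_{l\le h}\mathcal{F}_l$. $\tilde{\boldsymbol{B}}=2^{-2(K-1)}\sum_qn_q^{-1}\boldsymbol{b}_q\boldsymbol{b}_q'$; subvector/submatrix notation $\boldsymbol{b}_q[\mathcal{I}]$, $\tilde{\boldsymbol{B}}[\mathcal{I},\mathcal{J}]$. $\boldsymbol{c}_q[1]=\boldsymbol{b}_q[\mathcal{F}_1]$, and for $h\ge2$, $\boldsymbol{c}_q[h]=\boldsymbol{b}_q[\mathcal{F}_h]-\tilde{\boldsymbol{B}}[\mathcal{F}_h,\mathcal{F}_{\overline{h-1}}]\{\tilde{\boldsymbol{B}}[\mathcal{F}_{\overline{h-1}},\mathcal{F}_{\overline{h-1}}]\}^{-1}\boldsymbol{b}_q[\mathcal{F}_{\overline{h-1}}]$; $\boldsymbol{c}_q=(\boldsymbol{c}_q[1]',\dots,\boldsymbol{c}_q[H]')'$ (with coordinates of $\boldsymbol{b}_q$ ordered by tiers). $\boldsymbol{\Psi}\in\mathbb{R}^{F\times F}$ is the common matrix with $\boldsymbol{b}_q=\boldsymbol{\Psi}\boldsymbol{c}_q$ for all $q$; $\tilde{\boldsymbol{C}}=2^{-2(K-1)}\sum_qn_q^{-1}\boldsymbol{c}_q\boldsymbol{c}_q'$. $\hat{\boldsymbol{\theta}}_x[h]=2^{-(K-1)}\sum_q\boldsymbol{c}_q[h]\otimes\hat{\bar{\boldsymbol{x}}}(q)$;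 $\boldsymbol{W}_{\tau x}[h]=2^{-2(K-1)}\sum_qn_q^{-1}(\boldsymbol{b}_q\boldsymbol{c}_q[h]')\otimes\boldsymbol{S}_{q,x}$, $\boldsymbol{W}_{xx}[h]=2^{-2(K-1)}\sum_qn_q^{-1}(\boldsymbol{c}_q[h]\boldsymbol{c}_q[h]')\otimes\boldsymbol{S}_{xx}$, $\boldsymbol{W}^{\parallel}_{\tau\tau}[h]=\boldsymbol{W}_{\tau x}[h]\boldsymbol{W}_{xx}[h]^{-1}\boldsymbol{W}_{\tau x}[h]'$. *)

(* Defs.v *)
From mathcomp Require Import all_boot all_order all_algebra.
From mathcomp Require Import mxtens.
Set Implicit Arguments. Unset Strict Implicit. Unset Printing Implicit Defensive.
Import Order.TTheory GRing.Theory Num.Theory.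
Local Open Scope ring_scope.

Section Design.
Variable R : rcfType.

Definition posdef n (X : 'M[R]_n) : Prop :=
  forall v : 'rV[R]_n, v != 0 -> 0 < (v *m X *m v^T) 0 0.

Definition is_sqrtm n (A X : 'M[R]_n) : Prop :=
  X^T = X /\ posdef X /\ X *m X = A.

(* subvector / submatrix indexed by subsets (coordinates in increasing order) *)
Definition subv m (P : {set 'I_m}) (v : 'cV[R]_m) : 'cV[R]_#|P| :=
  \col_(i < #|P|) v (enum_val i) 0.
Definition subm m (P Q : {set 'I_m}) (M : 'M[R]_m) : 'M[R]_(#|P|, #|Q|) :=
  \matrix_(i < #|P|, j < #|Q|) M (enum_val i) (enum_val j).

Variable K : nat.
(* Q = 2^K treatment combinations, F = 2^K - 1 factorial effects *)
Notation Q := (2 ^ K)%N.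
Notation F := (2 ^ K).-1.

Lemma Q_gt0 : (0 < Q)%N. Proof. by rewrite expn_gt0. Qed.
(* the treatment combination q = 1 *)
Definition q1 : 'I_Q := Ordinal Q_gt0.

(* iota q k = true means factor k is at level +1 in combination q *)
Variable iota : 'I_Q -> {ffun 'I_K -> bool}.
(* eff f = the nonempty subset A of factors defining effect f *)
Variable eff : 'I_F -> {set 'I_K}.

Definition sgn (b : bool) : R := if b then 1 else -1.
Definition iotak (k : 'I_K) (q : 'I_Q) : R := sgn (iota q k).
Definition g (f : 'I_F) (q : 'I_Q) : R := \prod_(k in eff f) iotak k q.
Definition bvec (q : 'I_Q) : 'cV[R]_F := \col_f g f q.

Definition cK : R := 2%:R ^+ K.-1.

Variables (n L : nat).
Variable Y : 'I_n -> 'I_Q -> R.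
Variable x : 'I_n -> 'rV[R]_L.
Variable nq : 'I_Q -> nat.

Definition tau (i : 'I_n) : 'cV[R]_F := cK^-1 *: \sum_q Y i q *: bvec q.

Definition Ybar (q : 'I_Q) : R := n%:R^-1 * \sum_i Y i q.
Definition xbar : 'rV[R]_L := n%:R^-1 *: \sum_i x i.
Definition taubar : 'cV[R]_F := n%:R^-1 *: \sum_i tau i.

Definition Sqq (q : 'I_Q) : R := (n.-1)%:R^-1 * \sum_i (Y i q - Ybar q) ^+ 2.
Definition Stt : 'M[R]_F :=
  (n.-1)%:R^-1 *: \sum_i ((tau i - taubar) *m (tau i - taubar)^T).
Definition Sxx : 'M[R]_L :=
  (n.-1)%:R^-1 *: \sum_i ((x i - xbar)^T *m (x i - xbar)).
Definition Sqx (q : 'I_Q) : 'rV[R]_L :=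
  (n.-1)%:R^-1 *: \sum_i ((Y i q - Ybar q) *: (x i - xbar)).
Definition S11par : R := (Sqx q1 *m invmx Sxx *m (Sqx q1)^T) 0 0.

Definition Vtt : 'M[R]_F :=
  cK^-2 *: \sum_q ((nq q)%:R^-1 * Sqq q) *: (bvec q *m (bvec q)^T)
  - n%:R^-1 *: Stt.

Variable H : nat.
Variable tier : 'I_F -> 'I_H.

Definition Btil : 'M[R]_F :=
  cK^-2 *: \sum_q (nq q)%:R^-1 *: (bvec q *m (bvec q)^T).

Definition tierset (h : 'I_H) : {set 'I_F} := [set f | tier f == h].
Definition prevset (h : 'I_H) : {set 'I_F} := [set f | (tier f < h)%N].

(* c_q, with coordinate f (in tier h) equal to
   b_q[f] - Btil[f, F_{h-1 bar}] Btil[F_{h-1 bar}, F_{h-1 bar}]^{-1} b_q[F_{h-1 bar}]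
   (for h = 1 the subtracted term is over the empty set, hence 0). *)
Definition cvec (q : 'I_Q) : 'cV[R]_F :=
  \col_f (bvec q f 0 -
    ((\row_(j < #|prevset (tier f)|) Btil f (enum_val j))
       *m invmx (subm (prevset (tier f)) (prevset (tier f)) Btil)
       *m subv (prevset (tier f)) (bvec q)) 0 0).

Definition cvech (q : 'I_Q) (h : 'I_H) : 'cV[R]_#|tierset h| :=
  subv (tierset h) (cvec q).

Definition Ctil : 'M[R]_F :=
  cK^-2 *: \sum_q (nq q)%:R^-1 *: (cvec q *m (cvec q)^T).

Definition Wtx (h : 'I_H) : 'M[R]_(F * 1, #|tierset h| * L) :=
  cK^-2 *: \sum_q (nq q)%:R^-1 *: ((bvec q *m (cvech q h)^T) *t Sqx q).
Definition Wxx (h : 'I_H) : 'M[R]_(#|tierset h| * L) :=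
  cK^-2 *: \sum_q (nq q)%:R^-1 *: ((cvech q h *m (cvech q h)^T) *t Sxx).
Definition Wpar (h : 'I_H) : 'M[R]_F :=
  castmx (muln1 F, muln1 F) (Wtx h *m invmx (Wxx h) *m (Wtx h)^T).

End Design.

(* Main.v *)
Require Import Defs.
From mathcomp Require Import all_boot all_order all_algebra.
From mathcomp Require Import mxtens.
Import Order.TTheory GRing.Theory Num.Theory.
Local Open Scope ring_scope.
Set Implicit Arguments. Unset Strict Implicit. Unset Printing Implicit Defensive.

Section Gen.
Variable R : rcfType.

Lemma posdef_ge0 n (X : 'M[R]_n) (v : 'rV[R]_n) : posdef X -> 0 <= (v *m X *m v^T) 0 0.
Proof.
move=> pX; have [->|nz] := eqVneq v 0; first by rewrite !mul0mx mxE.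
exact: ltW (pX v nz).
Qed.

Lemma posdef_eq0 n (X : 'M[R]_n) (v : 'rV[R]_n) : posdef X -> (v *m X *m v^T) 0 0 = 0 -> v = 0.
Proof.
move=> pX h; apply/eqP; apply: contraT => nz.
by have := pX v nz; rewrite h ltxx.
Qed.

Lemma posdef_unit n (X : 'M[R]_n) : posdef X -> X \in unitmx.
Proof.
move=> pX; apply: contraT; rewrite -row_free_unit -kermx_eq0.
move=> /rowV0Pn [v /sub_kermxP vX0 vn0].
by have := pX v vn0; rewrite vX0 mul0mx mxE ltxx.
Qed.

Lemma entry_mul m n p (A : 'M[R]_(m,n)) (B : 'M[R]_(n,p)) i j :
  (A *m B) i j = (row i A *m col j B) 0 0.
Proof. by rewrite !mxE; apply: eq_bigr => k _; rewrite !mxE. Qed.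

Lemma trace_quad m n (A : 'M[R]_(m,n)) (X : 'M[R]_n) :
  \tr (A *m X *m A^T) = \sum_i (row i A *m X *m (row i A)^T) 0 0.
Proof.
rewrite /mxtrace; apply: eq_bigr => i _.
by rewrite [LHS]entry_mul row_mul -tr_row.
Qed.

Lemma sqrt_uniq n (X Y : 'M[R]_n) : posdef X -> posdef Y ->
  X *m X = Y *m Y -> X = Y.
Proof.
move=> pX pY XY.
pose D := X - Y.
have E : X *m D = - (D *m Y).
  by rewrite /D mulmxBr mulmxBl XY opprB.
have t1 : \tr (D^T *m X *m D^T^T) = - \tr (D *m Y *m D^T).
  by rewrite trmxK -mulmxA E mulmxN raddfN mxtrace_mulC mulmxA.
rewrite !trace_quad in t1.
have s1 : 0 <= \sum_i (row i D^T *m X *m (row i D^T)^T) 0 0.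
  by apply: sumr_ge0 => i _; apply: posdef_ge0.
have s2 : 0 <= \sum_i (row i D *m Y *m (row i D)^T) 0 0.
  by apply: sumr_ge0 => i _; apply: posdef_ge0.
have z : \sum_i (row i D^T *m X *m (row i D^T)^T) 0 0 = 0.
  apply/eqP; rewrite eq_le s1 andbT t1 oppr_le0 //.
have DT0 : D^T = 0.
  apply/row_matrixP => i; rewrite row0.
  apply: (posdef_eq0 pX).
  exact: (psumr_eq0P (fun i _ => posdef_ge0 (row i D^T) pX) z).
apply/eqP; rewrite -subr_eq0; apply/eqP.
by rewrite -[X - Y]trmxK -/D DT0 trmx0.
Qed.

Lemma invmxM n (A B : 'M[R]_n) : A \in unitmx -> B \in unitmx ->
  invmx (A *m B) = invmx B *m invmx A.
Proof.
move=> uA uB; have uAB : A *m B \in unitmx by rewrite unitmx_mul uA.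
have h : (A *m B) *m (invmx B *m invmx A) = 1%:M.
  by rewrite mulmxA mulmxK // mulmxV.
by rewrite -[LHS]mulmx1 -h mulmxA mulVmx // mul1mx.
Qed.

Lemma mulmx1C_gen m n (e : m = n) (A : 'M[R]_(m,n)) (B : 'M[R]_(n,m)) :
  A *m B = 1%:M -> B *m A = 1%:M.
Proof. by case: n / e A B => A B; apply: mulmx1C. Qed.

Lemma unitmx_dim0 m (A : 'M[R]_m) : m = 0%N -> A \in unitmx.
Proof. by case: m A => // A _; rewrite unitmxE det_mx00 unitr1. Qed.

Definition Sel m (P : {set 'I_m}) : 'M[R]_(#|P|, m) :=
  \matrix_(i, f) (enum_val i == f)%:R.

Lemma Sel_mul m (P : {set 'I_m}) p (v : 'M[R]_(m,p)) i j :
  (Sel P *m v) i j = v (enum_val i) j.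
Proof.
rewrite !mxE (bigD1 (enum_val i)) //= mxE eqxx mul1r big1 ?addr0 // => f.
by rewrite mxE eq_sym => /negbTE ->; rewrite mul0r.
Qed.

Lemma Sel_subv m (P : {set 'I_m}) (v : 'cV[R]_m) : subv P v = Sel P *m v.
Proof. by apply/matrixP => i j; rewrite Sel_mul !mxE [j]ord1. Qed.

Lemma Sel_subm m (P : {set 'I_m}) (M : 'M[R]_m) :
  subm P P M = Sel P *m M *m (Sel P)^T.
Proof.
apply/matrixP => i j; rewrite -mulmxA Sel_mul -[M *m _]trmxK trmx_mul trmxK.
by rewrite mxE [RHS]mxE Sel_mul mxE.
Qed.

Lemma Sel_SelT m (P : {set 'I_m}) : Sel P *m (Sel P)^T = 1%:M.
Proof.
apply/matrixP => i j; rewrite Sel_mul !mxE.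
by rewrite (inj_eq enum_val_inj) eq_sym.
Qed.

Lemma SelT_Sel m (P : {set 'I_m}) :
  (Sel P)^T *m Sel P = diag_mx (\row_f (f \in P)%:R).
Proof.
apply/matrixP => f f'; rewrite !mxE.
case: (boolP (f \in P)) => fP.
  rewrite (bigD1 (enum_rank_in fP f)) //= !mxE enum_rankK_in // eqxx mul1r.
  rewrite big1 ?addr0; first by rewrite mulr1n.
  move=> i ne; rewrite !mxE.
  have -> : (enum_val i == f) = false.
    apply: contraNF ne => /eqP E; apply/eqP; apply: enum_val_inj.
    by rewrite E enum_rankK_in.
  by rewrite mul0r.
rewrite mul0rn big1 // => i _; rewrite !mxE.
have -> : (enum_val i == f) = false.
  by apply/negbTE; apply: contra fP => /eqP <-; exact: enum_valP.
by rewrite mul0r.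
Qed.

End Gen.

Section Design2.
Variable R : rcfType.
Variable K : nat.
Variable iota : 'I_(2 ^ K) -> {ffun 'I_K -> bool}.
Hypothesis Hiota : bijective iota.
Variable eff : 'I_(2 ^ K).-1 -> {set 'I_K}.
Hypothesis Heff_inj : injective eff.
Hypothesis Heff_ne : forall f, eff f != set0.

Local Notation g := (@g R K iota eff).
Local Notation F := (2 ^ K).-1.
Local Notation Q := (2 ^ K)%N.

Lemma sgn_sq (b : bool) : sgn R b * sgn R b = 1.
Proof. by case: b; rewrite /sgn ?mulr1 ?mulrNN ?mulr1. Qed.

Lemma sum_prod_sgn (S : {set 'I_K}) :
  \sum_q \prod_(k in S) iotak R iota k q = if S == set0 then Q%:R else 0.
Proof.
have -> : \sum_q \prod_(k in S) iotak R iota k q =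
    \sum_(phi : {ffun 'I_K -> bool}) \prod_(k in S) sgn R (phi k).
  by rewrite [RHS](reindex iota) //=; exact: onW_bij.
under eq_bigr do rewrite big_mkcond /=.
rewrite -(bigA_distr_bigA (fun k b => if k \in S then sgn R b else 1)) /=.
under eq_bigr do rewrite big_bool /=.
case: eqP => [->|/eqP /set0Pn [k kS]].
  under eq_bigr do rewrite in_set0.
  by rewrite prodr_const card_ord natrX.
rewrite (bigD1 k) //= kS /sgn addrN mul0r //.
Qed.

Lemma g_mul f f' q : g f q * g f' q =
  \prod_(k in [set k | (k \in eff f) != (k \in eff f')]) iotak R iota k q.
Proof.
rewrite /Defs.g !(big_mkcond (fun k => k \in _)) -big_split /=.
apply: eq_bigr => k _; rewrite inE.
case: (k \in eff f); case: (k \in eff f'); rewrite /= ?mulr1 ?mul1r //.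
exact: sgn_sq.
Qed.

Lemma g_orth f f' : \sum_q g f q * g f' q = if f == f' then Q%:R else 0.
Proof.
rewrite (eq_bigr _ (fun q _ => g_mul f f' q)) sum_prod_sgn.
congr (if _ then _ else _).
apply/eqP/eqP => [D0|->].
  apply: Heff_inj; apply/setP => k.
  have := in_set0 k; rewrite -D0 inE => /negbFE /eqP //.
by apply/setP => k; rewrite !inE eqxx.
Qed.

Lemma g_sum f : \sum_q g f q = 0.
Proof.
have := sum_prod_sgn (eff f); rewrite (negbTE (Heff_ne f)).
by [].
Qed.

Definition Bmat : 'M[R]_(F, Q) := \matrix_(f, q) g f q.

Lemma Bmat_orth : Bmat *m Bmat^T = Q%:R%:M.
Proof.
apply/matrixP => f f'; rewrite !mxE (eq_bigr (fun q => g f q * g f' q)).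
  by rewrite g_orth; case: eqP.
by move=> q _; rewrite !mxE.
Qed.

Lemma Q_eq : (1 + F)%N = Q.
Proof. by rewrite add1n prednK // expn_gt0. Qed.

Lemma g_complete q q' :
  1 + \sum_f g f q * g f q' = (q == q')%:R * Q%:R.
Proof.
pose c : 'M[R]_(1, Q) := const_mx 1.
pose G := col_mx c Bmat.
have hQ : (Q%:R : R) != 0 by rewrite pnatr_eq0 -lt0n expn_gt0.
have GG : G *m G^T = Q%:R%:M.
  rewrite /G tr_col_mx mul_col_row Bmat_orth [RHS]scalar_mx_block.
  congr block_mx.
  - apply/matrixP => i j; rewrite /c !mxE [i]ord1 [j]ord1 /= mulr1n.
    rewrite (eq_bigr (fun _ => 1)); last by move=> k _; rewrite !mxE mulr1.
    by rewrite sumr_const card_ord.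
  - apply/matrixP => i j; rewrite /c !mxE (eq_bigr (fun k => g j k)) ?g_sum //.
    by move=> k _; rewrite !mxE mul1r.
  - apply/matrixP => i j; rewrite /c !mxE (eq_bigr (fun k => g i k)) ?g_sum //.
    by move=> k _; rewrite !mxE mulr1.
have h1 : G *m (Q%:R^-1 *: G^T) = 1%:M.
  by rewrite -scalemxAr GG scale_scalar_mx mulVf.
have := mulmx1C_gen Q_eq h1.
rewrite -scalemxAl /G tr_col_mx mul_row_col => /(congr1 (fun M => Q%:R *: M)).
rewrite scalerA divff // scale1r => /matrixP /(_ q q').
rewrite !mxE mulrC => <-.
congr (_ + _).
  by rewrite big_ord1 !mxE mulr1.
by apply: eq_bigr => f _; rewrite !mxE.
Qed.

Lemma orth_const (d : 'I_Q -> R) :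
  (forall f, \sum_q d q * g f q = 0) -> forall q, d q = Q%:R^-1 * \sum_q' d q'.
Proof.
move=> hd q.
have hQ : (Q%:R : R) != 0 by rewrite pnatr_eq0 -lt0n expn_gt0.
apply: (mulfI hQ); rewrite mulrA divff // mul1r.
have E : \sum_q' d q' * (1 + \sum_f g f q * g f q') =
       \sum_q' d q' * ((q == q')%:R * Q%:R).
  by apply: eq_bigr => q' _; rewrite g_complete.
have R1 : \sum_q' d q' * ((q == q')%:R * Q%:R) = d q * Q%:R.
  rewrite (bigD1 q) //= eqxx mul1r big1 ?addr0 // => q' /negbTE.
  by rewrite eq_sym => ->; rewrite mul0r mulr0.
rewrite mulrC -R1 -E.
under eq_bigr do rewrite mulrDr mulr1 mulr_sumr.
rewrite big_split /= exchange_big /= [X in _ + X]big1 ?addr0 //.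
move=> f _; have := hd f => /(congr1 (fun z => g f q * z)).
rewrite mulr0 mulr_sumr => E2; rewrite -[X in _ = X]E2.
by apply: eq_bigr => q' _; rewrite mulrCA.
Qed.

End Design2.

Section Main.
Variable R : rcfType.
Variable K : nat.
Hypothesis HK : (0 < K)%N.
Variable iota : 'I_(2 ^ K) -> {ffun 'I_K -> bool}.
Hypothesis Hiota : bijective iota.
Variable eff : 'I_(2 ^ K).-1 -> {set 'I_K}.
Hypothesis Heff_inj : injective eff.
Hypothesis Heff_ne : forall f, eff f != set0.
Variables (n L : nat) (Y : 'I_n -> 'I_(2 ^ K) -> R) (x : 'I_n -> 'rV[R]_L).
Variable nq : 'I_(2 ^ K) -> nat.
Hypothesis Hnq : forall q, (0 < nq q)%N.
Hypothesis Hn : (\sum_q nq q)%N = n.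
Hypothesis Hadd : forall i j : 'I_n, tau iota eff Y i = tau iota eff Y j.

Local Notation F := (2 ^ K).-1.
Local Notation Q := (2 ^ K)%N.
Local Notation g := (@g R K iota eff).
Local Notation b := (@bvec R K iota eff).
Local Notation q1 := (q1 K).
Local Notation Bt := (Btil R iota eff nq).

Lemma n_gt0 : (0 < n)%N.
Proof.
rewrite -Hn (bigD1 q1) //=; exact: leq_trans (Hnq q1) (leq_addr _ _).
Qed.

Lemma n_neq0 : (n%:R : R) != 0.
Proof. by rewrite pnatr_eq0 -lt0n n_gt0. Qed.

Lemma cK_neq0 : cK R K != 0.
Proof. by rewrite /cK expf_neq0 // pnatr_eq0. Qed.

Lemma tau_entry i f : tau iota eff Y i f 0 = (cK R K)^-1 * \sum_q Y i q * g f q.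
Proof.
rewrite /tau mxE summxE; congr (_ * _); apply: eq_bigr => q _.
by rewrite !mxE.
Qed.

Lemma Y_diff_ij i j q : Y i q - Y j q = Y i q1 - Y j q1.
Proof.
have h := orth_const Hiota Heff_inj Heff_ne (d := fun q => Y i q - Y j q).
suff hd : forall f, \sum_q (Y i q - Y j q) * g f q = 0.
  by rewrite (h hd q) (h hd q1).
move=> f; have := congr1 (fun M : 'cV[R]_F => M f 0) (Hadd i j).
rewrite /= !tau_entry => /(mulfI (invr_neq0 cK_neq0)) E.
under eq_bigr do rewrite mulrBl.
by rewrite sumrB E subrr.
Qed.

Lemma Y_diff i q : Y i q - Ybar Y q = Y i q1 - Ybar Y q1.
Proof.
have e : forall q, Y i q - Ybar Y q = n%:R^-1 * \sum_j (Y i q - Y j q).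
  move=> q'; rewrite sumrB sumr_const card_ord /Ybar mulrBr; congr (_ - _).
  by rewrite -[Y i q' *+ n]mulr_natl mulrA mulVf ?n_neq0 // mul1r.
rewrite !e; congr (_ * _); apply: eq_bigr => j _; exact: Y_diff_ij.
Qed.

Lemma Sqq_eq q : Sqq Y q = Sqq Y q1.
Proof. by rewrite /Sqq; congr (_ * _); apply: eq_bigr => i _; rewrite Y_diff. Qed.

Lemma Sqx_eq q : Sqx Y x q = Sqx Y x q1.
Proof. by rewrite /Sqx; congr (_ *: _); apply: eq_bigr => i _; rewrite Y_diff. Qed.

Lemma Stt_0 : Stt iota eff Y = 0.
Proof.
have i0 : 'I_n := Ordinal n_gt0.
have e : forall i, tau iota eff Y i - taubar iota eff Y = 0.
  move=> i; rewrite /taubar (eq_bigr (fun _ => tau iota eff Y i)).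
    by rewrite sumr_const card_ord -scaler_nat scalerA mulVf ?n_neq0 // scale1r subrr.
  by move=> j _; rewrite (Hadd j i).
rewrite /Stt big1 ?scaler0 // => i _; by rewrite e mul0mx.
Qed.

Lemma Vtt_eq : Vtt iota eff Y nq = Sqq Y q1 *: Bt.
Proof.
rewrite /Vtt Stt_0 scaler0 subr0 /Btil [RHS]scalerA mulrC -scalerA.
congr (_ *: _); rewrite scaler_sumr; apply: eq_bigr => q _.
by rewrite Sqq_eq !scalerA mulrC.
Qed.

Lemma Sqq_ge0 : 0 <= Sqq Y q1.
Proof.
rewrite /Sqq mulr_ge0 ?invr_ge0 ?ler0n //.
by apply: sumr_ge0 => i _; exact: sqr_ge0.
Qed.

Lemma sum_outer p r (M : 'M[R]_(p, F)) (N : 'M[R]_(r, F)) (u : 'I_Q -> 'cV[R]_F)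
    (w : 'I_Q -> R) (c : R) :
  c *: \sum_q w q *: ((M *m u q) *m (N *m u q)^T) =
  M *m (c *: \sum_q w q *: (u q *m (u q)^T)) *m N^T.
Proof.
rewrite -scalemxAr -scalemxAl; congr (_ *: _).
rewrite mulmx_sumr mulmx_suml; apply: eq_bigr => q _.
by rewrite -scalemxAr -scalemxAl trmx_mul !mulmxA.
Qed.

Lemma quad_sum (v : 'rV[R]_F) (u : 'I_Q -> 'cV[R]_F) (w : 'I_Q -> R) :
  (v *m (\sum_q w q *: (u q *m (u q)^T)) *m v^T) 0 0 =
  \sum_q w q * ((v *m u q) 0 0) ^+ 2.
Proof.
rewrite mulmx_sumr mulmx_suml summxE; apply: eq_bigr => q _.
rewrite -scalemxAr -scalemxAl mxE; congr (_ * _).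
rewrite (_ : v *m (u q *m (u q)^T) *m v^T = (v *m u q) *m (v *m u q)^T); last by rewrite trmx_mul !mulmxA.
rewrite mxE big_ord1 mxE expr2.
by rewrite !mxE.
Qed.

Lemma Bt_posdef : posdef Bt.
Proof.
move=> v vn0.
rewrite /Btil -scalemxAr -scalemxAl mxE quad_sum.
have hc : 0 < (cK R K)^-2 by rewrite invr_gt0 exprn_gt0 // exprn_gt0 // ltr0n.
rewrite mulr_gt0 // lt_def; apply/andP; split; last first.
  by apply: sumr_ge0 => q _; rewrite mulr_ge0 ?invr_ge0 ?ler0n ?sqr_ge0.
apply: contra vn0 => /eqP z.
have z' : forall q, (v *m b q) 0 0 = 0.
  have hge : forall q, true -> 0 <= (nq q)%:R^-1 * (v *m b q) 0 0 ^+ 2.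
    by move=> q _; rewrite mulr_ge0 ?invr_ge0 ?ler0n ?sqr_ge0.
  move=> q; have /eqP := psumr_eq0P hge z (i := q) isT.
  rewrite mulf_eq0 invr_eq0 pnatr_eq0 eqn0Ngt Hnq /=.
  by rewrite expf_eq0 /= => /eqP.
have vB : v *m Bmat R iota eff = 0.
  apply/rowP => q; rewrite [RHS]mxE -(z' q) !mxE; apply: eq_bigr => f _.
  by rewrite !mxE.
have := congr1 (fun M => M *m (Bmat R iota eff)^T) vB.
rewrite -mulmxA (Bmat_orth R Hiota Heff_inj) mul0mx mul_mx_scalar => /eqP.
rewrite scaler_eq0 pnatr_eq0 expn_eq0 /= => /eqP ->; by [].
Qed.


Variable H : nat.
Variable tier : 'I_(2 ^ K).-1 -> 'I_H.
Variable Psi : 'M[R]_((2 ^ K).-1).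
Hypothesis HPsi : forall q, bvec R iota eff q = Psi *m cvec R iota eff nq tier q.

Local Notation Ct := (Ctil R iota eff nq tier).
Local Notation c := (cvec R iota eff nq tier).

Lemma Bt_unit : Bt \in unitmx.
Proof. exact: posdef_unit Bt_posdef. Qed.

Lemma Bt_eq : Bt = Psi *m Ct *m Psi^T.
Proof.
rewrite /Btil /Ctil -sum_outer; congr (_ *: _); apply: eq_bigr => q _.
by rewrite HPsi.
Qed.

Lemma Psi_unit : Psi \in unitmx.
Proof. by have := Bt_unit; rewrite Bt_eq !unitmx_mul => /andP [/andP []]. Qed.

Lemma Ct_unit : Ct \in unitmx.
Proof. by have := Bt_unit; rewrite Bt_eq !unitmx_mul => /andP [/andP []]. Qed.

Lemma Ct_posdef : posdef Ct.
Proof.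
move=> v vn0.
have -> : Ct = invmx Psi *m Bt *m (invmx Psi)^T.
  rewrite Bt_eq trmx_inv -!mulmxA mulKmx ?Psi_unit //.
  by rewrite mulmxV ?unitmx_tr ?Psi_unit // mulmx1.
rewrite !mulmxA -(mulmxA _ (invmx Psi)^T) -trmx_mul.
apply: Bt_posdef; apply: contra vn0 => /eqP h.
by rewrite -[v](mulmxKV Psi_unit) h mul0mx.
Qed.

Lemma Ct_sym : Ct^T = Ct.
Proof.
rewrite /Ctil linearZ /= linear_sum /=; congr (_ *: _); apply: eq_bigr => q _.
by rewrite linearZ /= trmx_mul trmxK.
Qed.

Lemma Bt_sym : Bt^T = Bt.
Proof.
rewrite /Btil linearZ /= linear_sum /=; congr (_ *: _); apply: eq_bigr => q _.
by rewrite linearZ /= trmx_mul trmxK.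
Qed.

Lemma mulSelT m (P : {set 'I_m}) (w : 'rV[R]_m) j :
  (w *m (Sel R P)^T) 0 j = w 0 (enum_val j).
Proof. by rewrite -[w *m _]trmxK trmx_mul trmxK mxE Sel_mul mxE. Qed.

Lemma Sel_posdef m (P : {set 'I_m}) (M : 'M[R]_m) :
  posdef M -> posdef (Sel R P *m M *m (Sel R P)^T).
Proof.
move=> pM v vn0; rewrite !mulmxA -(mulmxA _ (Sel R P)^T) -trmx_mul.
apply: pM; apply: contra vn0 => /eqP h.
by rewrite -[v]mulmx1 -(Sel_SelT R P) mulmxA h mul0mx.
Qed.

Definition Pf (f : 'I_F) := prevset tier (tier f).
Definition Mf (f : 'I_F) := Sel R (Pf f) *m Bt *m (Sel R (Pf f))^T.
Definition Xf (f : 'I_F) := row f Bt *m (Sel R (Pf f))^T *m invmx (Mf f).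
Definition rvec (f : 'I_F) : 'rV[R]_F := delta_mx 0 f - Xf f *m Sel R (Pf f).

Lemma Mf_unit f : Mf f \in unitmx.
Proof. exact/posdef_unit/Sel_posdef/Bt_posdef. Qed.

Lemma cvec_r q f : c q f 0 = (rvec f *m b q) 0 0.
Proof.
rewrite /rvec mulmxBl -rowE [RHS]mxE [X in _ + X]mxE [row f _ 0 0]mxE mxE.
congr (_ - _).
rewrite Sel_subm Sel_subv /Xf /Mf -/(Pf f) !mulmxA; congr ((_ *m _ *m _ *m _) 0 0).
by apply/rowP => j; rewrite mulSelT !mxE.
Qed.

Definition Lmat : 'M[R]_F := \matrix_(f, f') rvec f 0 f'.

Lemma row_Lmat f : row f Lmat = rvec f.
Proof. by apply/rowP => j; rewrite !mxE. Qed.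

Lemma cvec_L q : c q = Lmat *m b q.
Proof.
apply/colP => f; rewrite cvec_r [RHS]entry_mul row_Lmat.
by congr ((_ *m _) 0 0); apply/colP => k; rewrite !mxE.
Qed.

Lemma Ct_L : Ct = Lmat *m Bt *m Lmat^T.
Proof.
rewrite /Ctil /Btil -sum_outer; congr (_ *: _); apply: eq_bigr => q _.
by rewrite cvec_L.
Qed.

Lemma Ct_entry i j : Ct i j = (rvec i *m Bt *m (rvec j)^T) 0 0.
Proof. by rewrite Ct_L [LHS]entry_mul row_mul row_Lmat -tr_row row_Lmat. Qed.

Lemma rvec_Bt_Sel f : rvec f *m Bt *m (Sel R (Pf f))^T = 0.
Proof.
rewrite /rvec !mulmxBl -rowE -!mulmxA (mulmxA (Sel R (Pf f))) -/(Mf f).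
by rewrite mulVmx ?Mf_unit // mulmx1 subrr.
Qed.

Lemma w_zero m (P : {set 'I_m}) (w : 'rV[R]_m) :
  w *m (Sel R P)^T = 0 -> forall f, f \in P -> w 0 f = 0.
Proof.
move=> h f fP; have := congr1 (fun M : 'rV[R]_#|P| => M 0 (enum_rank_in fP f)) h.
by rewrite /= mulSelT enum_rankK_in // mxE.
Qed.

Lemma rvec_supp j f : (tier j < tier f)%N -> rvec j 0 f = 0.
Proof.
move=> lt; rewrite /rvec !mxE.
have -> : (f == j) = false.
  by apply/negbTE; apply: contraTneq lt => ->; rewrite ltnn.
rewrite /= big1 ?subr0 // => k _; rewrite !mxE.
have -> : (enum_val k == f) = false.
  apply/negbTE; apply: contraTneq lt => <-.
  have := enum_valP k; rewrite inE -leqNgt => /ltnW //.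
by rewrite mulr0.
Qed.

Lemma Ct_block_lt i j : (tier j < tier i)%N -> Ct i j = 0.
Proof.
move=> lt; rewrite Ct_entry mxE big1 // => f _; rewrite [(rvec j)^T _ _]mxE.
case: (ltnP (tier f) (tier i)) => hf.
  rewrite (w_zero (rvec_Bt_Sel i)) ?mul0r // inE //.
by rewrite rvec_supp ?mulr0 //; exact: leq_trans lt hf.
Qed.

Lemma Ct_block i j : tier i != tier j -> Ct i j = 0.
Proof.
rewrite neq_ltn => /orP [] lt; last exact: Ct_block_lt.
by rewrite -Ct_sym mxE; apply: Ct_block_lt.
Qed.

Definition Ph (h : 'I_H) : 'M[R]_F := diag_mx (\row_f (tier f == h)%:R).
Definition Uh (h : 'I_H) : 'M[R]_F :=
  diag_mx (\row_f (if tier f == h then -1 else 1)).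

Lemma Uh_sym h : (Uh h)^T = Uh h.
Proof. exact: tr_diag_mx. Qed.

Lemma Uh_sq h : Uh h *m Uh h = 1%:M.
Proof.
apply/matrixP => i j; rewrite mul_diag_mx !mxE.
case: (i =P j) => [->|_]; rewrite ?mulr0n ?mulr0 //.
by case: (tier j == h); rewrite ?mulr1n ?mulrNN mulr1.
Qed.

Lemma Ct_Uh h : Ct *m Uh h = Uh h *m Ct.
Proof.
apply/matrixP => i j; rewrite mul_diag_mx mul_mx_diag [LHS]mxE [RHS]mxE.
have := Ct_block (i:=i) (j:=j); move: (Ct i j) => cij hb; rewrite !mxE.
case: (eqVneq (tier i) (tier j)) => [->|ne]; first by rewrite mulrC.
by rewrite hb // mul0r mulr0.
Qed.

Lemma Ph_Uh h : Ph h = 2%:R^-1 *: (1%:M - Uh h).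
Proof.
apply/matrixP => i j; rewrite !mxE.
case: (i =P j) => [->|_]; last by rewrite !mulr0n subrr mulr0.
rewrite !mulr1n; case: (tier j == h) => /=.
  by rewrite opprK -mulr2n mulVf // pnatr_eq0.
by rewrite subrr mulr0.
Qed.

Variable Ch : 'M[R]_F.
Hypothesis HCh : is_sqrtm Ct Ch.

Lemma Ch_Uh h : Ch *m Uh h = Uh h *m Ch.
Proof.
case: HCh => [Chs [Chp Chsq]].
pose U := Uh h.
have UT : U^T = U := Uh_sym h.
have UU : U *m U = 1%:M := Uh_sq h.
have CU : Ct *m U = U *m Ct := Ct_Uh h.
have e : U *m Ch *m U = Ch.
  apply: sqrt_uniq => //.
    move=> v vn0; rewrite !mulmxA -(mulmxA _ U) -{2}UT -trmx_mul.
    apply: Chp; apply: contra vn0 => /eqP hv.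
    by rewrite -[v]mulmx1 -UU mulmxA hv mul0mx.
  have -> : U *m Ch *m U *m (U *m Ch *m U) = U *m (Ch *m (U *m U) *m Ch) *m U.
    by rewrite !mulmxA.
  by rewrite UU mulmx1 Chsq -CU -mulmxA UU mulmx1.
by rewrite -{1}e -!mulmxA UU mulmx1.
Qed.

Lemma comm_Ph h (M : 'M[R]_F) : M *m Uh h = Uh h *m M -> M *m Ph h = Ph h *m M.
Proof.
move=> E; rewrite Ph_Uh -scalemxAr -scalemxAl.
by rewrite mulmxDr mulmxDl mulmxN mulNmx mulmx1 mul1mx E.
Qed.

Lemma Ch_Ph h : Ch *m Ph h = Ph h *m Ch.
Proof. exact/comm_Ph/Ch_Uh. Qed.

Lemma Ct_Ph h : Ct *m Ph h = Ph h *m Ct.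
Proof. exact/comm_Ph/Ct_Uh. Qed.

Local Notation Sh h := (Sel R (tierset tier h)).

Lemma ShT_Sh h : (Sh h)^T *m Sh h = Ph h.
Proof.
rewrite SelT_Sel; congr diag_mx; apply/rowP => f; by rewrite !mxE inE.
Qed.

Lemma Chh_unit h : Sh h *m Ct *m (Sh h)^T \in unitmx.
Proof. exact/posdef_unit/Sel_posdef/Ct_posdef. Qed.

Lemma key_proj h :
  Ct *m (Sh h)^T *m invmx (Sh h *m Ct *m (Sh h)^T) *m Sh h *m Ct = Ph h *m Ct.
Proof.
have e : Ct *m (Sh h)^T = (Sh h)^T *m (Sh h *m Ct *m (Sh h)^T).
  rewrite !mulmxA ShT_Sh -Ct_Ph -ShT_Sh -!mulmxA.
  by rewrite (Sel_SelT R (tierset tier h)) mulmx1.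
by rewrite e mulmxK ?Chh_unit // ShT_Sh.
Qed.

Lemma tens_lin p1 r1 p2 r2 (a : R) (w : 'I_Q -> R) (A : 'I_Q -> 'M[R]_(p1,r1))
    (B : 'M[R]_(p2,r2)) :
  a *: \sum_q w q *: (A q *t B) = (a *: \sum_q w q *: A q) *t B.
Proof.
apply/matrixP => i j; rewrite !mxE !summxE -mulrA mulr_suml; congr (_ * _).
by apply: eq_bigr => q _; rewrite !mxE !mulrA.
Qed.

Lemma tens_quad p k l (A : 'M[R]_(p,k)) (C : 'M[R]_k) (B : 'M[R]_(1,l))
    (S : 'M[R]_l) : C \in unitmx -> S \in unitmx ->
  (A *t B) *m invmx (C *t S) *m (A *t B)^T =
  (A *m invmx C *m A^T) *t (B *m invmx S *m B^T).
Proof.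
move=> uC uS.
have uW : C *t S \in unitmx.
  case: (eqVneq k 0%N) => [k0|k0]; first by apply: unitmx_dim0; rewrite k0.
  case: (eqVneq l 0%N) => [l0|l0]; first by apply: unitmx_dim0; rewrite l0 muln0.
  exact: tensmx_unit.
have e : A *t B = ((A *m invmx C) *t (B *m invmx S)) *m (C *t S).
  by rewrite tensmx_mul !mulmxKV.
by rewrite {1}e mulmxK // trmx_tens tensmx_mul.
Qed.

Hypothesis HSxx : Sxx x \in unitmx.

Lemma Wpar_eq h : Wpar iota eff Y x nq tier h =
  S11par Y x *: (Psi *m Ct *m (Sh h)^T *m invmx (Sh h *m Ct *m (Sh h)^T)
                  *m (Psi *m Ct *m (Sh h)^T)^T).
Proof.
have eW : Wtx iota eff Y x nq tier h = (Psi *m Ct *m (Sh h)^T) *t Sqx Y x q1.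
  rewrite /Wtx /Ctil -sum_outer -tens_lin; congr (_ *: _).
  apply: eq_bigr => q _; by rewrite HPsi Sqx_eq /cvech Sel_subv.
have eX : Wxx iota eff x nq tier h = (Sh h *m Ct *m (Sh h)^T) *t Sxx x.
  rewrite /Wxx /Ctil -sum_outer -tens_lin; congr (_ *: _).
  apply: eq_bigr => q _; by rewrite /cvech Sel_subv.
rewrite /Wpar eW eX tens_quad ?Chh_unit //.
rewrite [Sqx Y x q1 *m _ *m _]mx11_scalar tens_mx_scalar castmx_comp castmx_id.
by [].
Qed.


Lemma F_gt0 : (0 < F)%N.
Proof. by rewrite ltn_predRL -{1}(expn0 2) ltn_exp2l. Qed.

Lemma final_sec (Bmh Vmh : 'M[R]_F)
  (HV : Vtt iota eff Y nq \in unitmx)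
  (HBmh : is_sqrtm (invmx Bt) Bmh)
  (HVmh : is_sqrtm (invmx (Vtt iota eff Y nq)) Vmh) :
  let Gamma := Bmh *m Psi *m Ch in
  Gamma^T *m Gamma = 1%:M /\
  forall h : 'I_H,
    Gamma^T *m Vmh *m Wpar iota eff Y x nq tier h *m Vmh *m Gamma =
    \matrix_(i, j) (if (i == j) && (tier i == h)
                    then S11par Y x / Sqq Y q1 else 0).
Proof.
move=> Gamma.
case: HBmh => [Bs [Bp Bsq]]; case: HCh => [Chs [Chp Chsq]].
have uPsi := Psi_unit; have uCt := Ct_unit.
have uCh : Ch \in unitmx by move: uCt; rewrite -Chsq unitmx_mul => /andP [].
have iCt : Psi^T *m (Bmh *m Bmh) *m Psi = invmx Ct.
  rewrite Bsq Bt_eq invmxM ?unitmx_mul ?uPsi ?uCt ?unitmx_tr //.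
  rewrite invmxM ?unitmx_tr // !mulmxA mulmxV ?unitmx_tr // mul1mx.
  by rewrite mulmxKV.
have ChiCh : Ch *m invmx Ct *m Ch = 1%:M.
  by rewrite -Chsq invmxM // mulmxA mulmxKV // mulmxV.
have GT : Gamma^T = Ch *m Psi^T *m Bmh by rewrite /Gamma !trmx_mul Bs Chs mulmxA.
split.
  rewrite GT /Gamma.
  have -> : Ch *m Psi^T *m Bmh *m (Bmh *m Psi *m Ch) =
            Ch *m (Psi^T *m (Bmh *m Bmh) *m Psi) *m Ch by rewrite !mulmxA.
  by rewrite iCt.
move=> h.
set s := Sqq Y q1.
have s_ge0 : 0 <= s := Sqq_ge0.
have s_gt0 : 0 < s.
  rewrite lt_def s_ge0 andbT; apply/eqP => s0.
  move: HV; rewrite Vtt_eq -/s s0 scale0r => u0.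
  have := mulmxV u0; rewrite mul0mx => /matrixP /(_ (Ordinal F_gt0) (Ordinal F_gt0)).
  by rewrite !mxE eqxx /= => /eqP; rewrite eq_sym oner_eq0.
pose a := (Num.sqrt s)^-1.
have a_gt0 : 0 < a by rewrite invr_gt0 sqrtr_gt0.
have aa : a * a = s^-1 by rewrite -invrM ?unitfE ?sqrtr_eq0 -?ltNge // -expr2 sqr_sqrtr.
have eV : Vmh = a *: Bmh.
  case: HVmh => [_ [Vp Vsq]].
  apply: sqrt_uniq => //.
    move=> v vn0; rewrite -scalemxAr -scalemxAl mxE mulr_gt0 //; exact: Bp.
  rewrite Vsq -scalemxAl -scalemxAr scalerA aa Bsq Vtt_eq invmxZ //.
  by rewrite -Vtt_eq.
rewrite Wpar_eq eV GT /Gamma.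
have gen : forall (C : 'M[R]_F) (X : 'M[R]_(#|tierset tier h|)),
   Ch *m Psi^T *m Bmh *m (a *: Bmh) *m
   (S11par Y x *: (Psi *m C *m (Sh h)^T *m X *m
                    (Psi *m C *m (Sh h)^T)^T)) *m (a *: Bmh) *m (Bmh *m Psi *m Ch) =
   (a * a * S11par Y x) *: (Ch *m (Psi^T *m (Bmh *m Bmh) *m Psi) *m
     (C *m (Sh h)^T *m X *m Sh h *m C^T) *m
     (Psi^T *m (Bmh *m Bmh) *m Psi) *m Ch).
  move=> C X; rewrite !trmx_mul trmxK.
  do ![rewrite -scalemxAl | rewrite -scalemxAr]; rewrite !scalerA !mulmxA.
  by rewrite mulrAC.
rewrite gen Ct_sym.
rewrite iCt key_proj !mulmxA mulmxK // -mulmxA -Ch_Ph mulmxA ChiCh mul1mx.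
apply/matrixP => i j; rewrite !mxE aa mulrC.
case: (i =P j) => [->|_] /=; last by rewrite mulr0n mul0r.
by case: (tier j == h); rewrite mulr1n ?mul1r ?mul0r // mulrC.
Qed.

End Main.

Theorem proposition8 (R : rcfType) (K : nat) (HK : (0 < K)%N)
  (iota : 'I_(2 ^ K) -> {ffun 'I_K -> bool}) (Hiota : bijective iota)
  (eff : 'I_(2 ^ K).-1 -> {set 'I_K})
  (Heff_inj : injective eff) (Heff_ne : forall f, eff f != set0)
  (n L : nat) (Y : 'I_n -> 'I_(2 ^ K) -> R) (x : 'I_n -> 'rV[R]_L)
  (nq : 'I_(2 ^ K) -> nat) (Hnq : forall q, (0 < nq q)%N)
  (Hn : (\sum_q nq q)%N = n)
  (H : nat) (tier : 'I_(2 ^ K).-1 -> 'I_H)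
  (Htier_surj : forall h : 'I_H, exists f, tier f = h)
  (Htier_ord : forall f f' : 'I_(2 ^ K).-1, (f <= f')%N -> (tier f <= tier f')%N)
  (HSxx : Sxx x \in unitmx)
  (Hadd : forall i j : 'I_n, tau iota eff Y i = tau iota eff Y j)
  (HV : Vtt iota eff Y nq \in unitmx)
  (Psi : 'M[R]_((2 ^ K).-1))
  (HPsi : forall q, bvec R iota eff q = Psi *m cvec R iota eff nq tier q)
  (Bmh Ch Vmh : 'M[R]_((2 ^ K).-1))
  (HBmh : is_sqrtm (invmx (Btil R iota eff nq)) Bmh)
  (HCh : is_sqrtm (Ctil R iota eff nq tier) Ch)
  (HVmh : is_sqrtm (invmx (Vtt iota eff Y nq)) Vmh) :
  let Gamma := Bmh *m Psi *m Ch in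
  Gamma^T *m Gamma = 1%:M /\
  forall h : 'I_H,
    Gamma^T *m Vmh *m Wpar iota eff Y x nq tier h *m Vmh *m Gamma =
    \matrix_(i, j) (if (i == j) && (tier i == h)
                    then S11par Y x / Sqq Y (q1 K) else 0).
Proof.
exact: (final_sec HK Hiota Heff_inj Heff_ne Hnq Hn Hadd HPsi HCh HSxx HV HBmh HVmh).
Qed.
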